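(* Let $V\neq\{0\}$ be a vector space over a field $F$ and let $T:V\to V$ have a vanishing polynomial, with minimal polynomial $p$. (1) If $T$ is nilpotent and is $\gamma$-homogeneous or absolutely $\gamma$-homogeneous, then $0$ is the only eigenvalue of $T$ (and it is the only root of $p$). (2) If $T$ is not nilpotent and $F$ is infinite, then for $\gamma\notin\{0,1\}$, $T$ is neither $\gamma$-homogeneous, nor absolutely $\gamma$-homogeneous, nor positively $\gamma$-homogeneous. (3) If $T$ is $1$-homogeneous and $|F|>2$, then $p(\lambda)=0$ for every eigenvalue $\lambda$ of $T$. If $T$ is absolutely $1$-homogeneous, then $p(0)=0$ and $p(|\lambda|)=0$ for every eigenvalue $\lambda$ of $T$. (4) Let $T$ be $0$-homogeneous, absolutely $0$-homogeneous, or positively $0$-homogeneous. If $p(1)\neq0$, then the only possible eigenvalue of $T$ is $0$ (in the positively homogeneous case: the only possible nonnegative eigenvalue is $0$). Moreover $p(0)=0$, except possibly in the case of (plain) $0$-homogeneity with $|F|=2$.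
   Context: $T^0=I$, $T^i=T\circ T^{i-1}$; $p(T)(v)=\sum a_iT^i(v)$. A vanishing polynomial of $T$ is a nonzero $p\in F[x]$ with $p(T)(v)=0$ for all $v$; the minimal polynomial is the unique monic one of least degree. $T$ is nilpotent if $T^m=0$ for some $m$. A vector $0\neq v$ is an eigenvector with eigenvalue $\lambda\in F$ if $T(v)=\lambda v$. For $\gamma\in\mathbb{N}$, $T$ is $\gamma$-homogeneous if $T(av)=a^\gamma T(v)$ for all $0\neq a\in F$, $v\in V$. For $F=\mathbb{R}$ or $\mathbb{C}$ and $\gamma\ge0$ real, $T$ is absolutely $\gamma$-homogeneous if $T(av)=|a|^\gamma T(v)$ for all $a\neq0$, $v\in V$. For $F=\mathbb{R}$ and $\gamma\ge0$, $T$ is positively $\gamma$-homogeneous if $T(av)=a^\gamma T(v)$ for all $a>0$, $v\in V$. *)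

(* Defs.v *)
From mathcomp Require Import all_boot all_algebra.
From mathcomp Require Export complex.
From mathcomp Require Export reals exp.
Export GRing.Theory Num.Theory.

Set Implicit Arguments.
Unset Strict Implicit.
Unset Printing Implicit Defensive.

Local Open Scope ring_scope.

Section GeneralField.
Variables (F : fieldType) (V : lmodType F).

(* T^i = iter i T  (T^0 = id, T^i = T o T^(i-1));  T : V -> V is an arbitrary map *)
Definition poly_app (p : {poly F}) (T : V -> V) (v : V) : V :=
  \sum_(i < size p) p`_i *: iter i T v.

Definition vanishing_poly_of (T : V -> V) (p : {poly F}) : Prop :=
  p != 0 /\ forall v : V, poly_app p T v = 0.

Definition minpoly_of (T : V -> V) (p : {poly F}) : Prop :=
  p \is monic /\ vanishing_poly_of T p /\
  forall q : {poly F}, vanishing_poly_of T q -> (size p <= size q)%N.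

Definition nilpotent_map (T : V -> V) : Prop :=
  exists m : nat, forall v : V, iter m T v = 0.

Definition eigenvalue_of (T : V -> V) (lam : F) : Prop :=
  exists v : V, v != 0 /\ T v = lam *: v.

Definition homogeneous_of (gamma : nat) (T : V -> V) : Prop :=
  forall (a : F) (v : V), a != 0 -> T (a *: v) = a ^+ gamma *: T v.

End GeneralField.

Definition abs_homogeneous_R (R : realType) (V : lmodType R) (gamma : R)
    (T : V -> V) : Prop :=
  forall (a : R) (v : V), a != 0 -> T (a *: v) = (`|a| `^ gamma) *: T v.

Definition abs_homogeneous_C (R : realType) (V : lmodType R[i]) (gamma : R)
    (T : V -> V) : Prop :=
  forall (a : R[i]) (v : V), a != 0 ->
    T (a *: v) = ((Normc.normc a) `^ gamma)%:C%C *: T v.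

Definition pos_homogeneous (R : realType) (V : lmodType R) (gamma : R)
    (T : V -> V) : Prop :=
  forall (a : R) (v : V), 0 < a -> T (a *: v) = (a `^ gamma) *: T v.

Definition infinite_type (F : eqType) : Prop :=
  forall s : seq F, exists x : F, x \notin s.

Definition card_gt2 (F : eqType) : Prop :=
  exists x y z : F, [/\ x != y, x != z & y != z].

(* Main.v *)
Require Import Defs.
From mathcomp Require Import all_boot all_algebra.
From mathcomp Require Import complex reals exp.
From mathcomp Require Import zify order.
Import Order.TTheory GRing.Theory Num.Theory.
Local Open Scope ring_scope.
Set Implicit Arguments.

Lemma natE (a i k : nat) : (a < i)%N -> (i + k = a + k.+1 + (i - a.+1))%N.
Proof. move=> H; lia. Qed.

Section Gen.
Variables (F : fieldType) (V : lmodType F) (T : V -> V).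

Lemma poly_app_eig (p : {poly F}) (mu : F) (w : V) :
  (forall i, iter i T w = mu ^+ i *: w) -> poly_app p T w = p.[mu] *: w.
Proof.
move=> H; rewrite /poly_app horner_coef scaler_suml; apply: eq_bigr => i _.
by rewrite H scalerA.
Qed.

Lemma root_eig (p : {poly F}) (mu : F) (w : V) :
  vanishing_poly_of T p -> w != 0 ->
  (forall i, iter i T w = mu ^+ i *: w) -> root p mu.
Proof.
move=> [_ vp] wn0 H; move: (vp w); rewrite (poly_app_eig _ _ _ H) => /eqP.
by rewrite scaler_eq0 (negbTE wn0) orbF.
Qed.

Lemma iter_eig (mu : F) (w : V) : T w = mu *: w ->
  (forall i, T (mu ^+ i *: w) = mu ^+ i *: T w) ->
  forall i, iter i T w = mu ^+ i *: w.
Proof.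
move=> Tw H; elim => [|i IH]; first by rewrite scale1r.
by rewrite iterS IH H Tw scalerA -exprSr.
Qed.

Lemma poly_app_shift (p : {poly F}) (x y : V) :
  (forall i, (0 < i)%N -> iter i T x = iter i T y) ->
  poly_app p T x - poly_app p T y = p`_0 *: (x - y).
Proof.
move=> H; rewrite /poly_app -sumrB.
case E: (size p) => [|n].
  rewrite big_ord0 nth_default ?E // scale0r //.
rewrite big_ord_recl scalerBr big1 ?addr0 // => i _.
by rewrite (H (bump 0 i)) ?subrr.
Qed.

Lemma root0_shift (p : {poly F}) (a : F) (v : V) :
  vanishing_poly_of T p -> v != 0 -> a != 1 ->
  (forall w, T (a *: w) = T w) -> root p 0.
Proof.
move=> [_ vp] vn0 a1 H.
have Hi : forall i, (0 < i)%N -> iter i T (a *: v) = iter i T v.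
  by case=> [//|i] _; rewrite !iterSr H.
have := poly_app_shift p _ _ Hi; rewrite !vp subrr => /eqP.
rewrite eq_sym -{2}(scale1r v) -scalerBl scaler_eq0.
rewrite [(_ - _) *: _ == 0]scaler_eq0 subr_eq0 (negbTE a1) (negbTE vn0) orbF.
by rewrite orbF => ?; rewrite rootE horner_coef0.
Qed.

Lemma nil_eig0 : nilpotent_map T -> (exists v : V, v != 0) -> eigenvalue_of T 0.
Proof.
move=> [m Hm] [v0 v0n0].
suff : forall n v, v != 0 -> iter n T v = 0 -> eigenvalue_of T 0.
  by move=> /(_ m v0 v0n0 (Hm v0)).
elim=> [|n IH] v vn0; first by move=> /= vz; rewrite vz eqxx in vn0.
rewrite iterSr; have [Tv0|Tvn0] := eqVneq (T v) 0.
  by move=> _; exists v; rewrite Tv0 scale0r.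
exact: IH.
Qed.

Definition weak_hom := forall (c : F) (v : V), c != 0 ->
  exists d : F, d != 0 /\ T (c *: v) = d *: T v.

Lemma nil_eig_only0 : nilpotent_map T -> weak_hom ->
  forall lam, eigenvalue_of T lam -> lam = 0.
Proof.
move=> [m Hm] wh lam [v [vn0 Tv]].
apply/eqP; apply/negPn/negP => lamn0.
have H : forall i, exists c, c != 0 /\ iter i T v = c *: v.
  elim=> [|i [c [cn0 Hc]]]; first by exists 1; rewrite oner_eq0 scale1r.
  have [d [dn0 Hd]] := wh c v cn0.
  exists (d * lam); rewrite mulf_neq0 //; split => //.
  by rewrite iterS Hc Hd Tv scalerA.
have [c [cn0 Hc]] := H m.
by move: (Hm v); rewrite Hc => /eqP; rewrite scaler_eq0 (negbTE cn0) (negbTE vn0).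
Qed.

Lemma nil_minpoly (p : {poly F}) : nilpotent_map T -> (exists v : V, v != 0) ->
  minpoly_of T p -> root p 0 /\ forall x, root p x -> x = 0.
Proof.
move=> [m Hm] [v0 v0n0] [pmon [[pn0 vp] pmin]].
have exn : exists n, p`_n != 0.
  by exists (size p).-1; rewrite -lead_coefE lead_coef_eq0.
have [a [pa plow]] : exists a, p`_a != 0 /\ forall i, (i < a)%N -> p`_i = 0.
  case: (ex_minnP exn) => b Hb Hmin; exists b; split => // i ib.
  by apply/eqP; apply/negPn/negP => /Hmin; rewrite leqNgt ib.
have asz : (a < size p)%N.
  by rewrite ltnNge; apply/negP => H; move: pa; rewrite nth_default // eqxx.
have QA : forall w, iter a T w = 0.
  have Qm : forall w, iter (a + m) T w = 0 by move=> w; rewrite addnC iterD Hm.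
  have step : forall k, (forall w, iter (a + k.+1) T w = 0) ->
      forall w, iter (a + k) T w = 0.
    move=> k Hk w.
    have := vp (iter k T w); rewrite /poly_app.
    rewrite (bigD1 (Ordinal asz)) // big1 ?addr0 /=.
      by move=> /eqP; rewrite addr0 -iterD scaler_eq0 (negbTE pa) orFb => /eqP.
    move=> i /eqP ia; have [ilt|igt] := ltnP i a.
      by rewrite plow // scale0r.
    have igt' : (a < i)%N.
      by rewrite ltn_neqAle igt andbT eq_sym; apply/eqP => E; apply: ia; apply: val_inj.
    have -> : iter i T (iter k T w) = iter (a + k.+1) T (iter (i - a.+1) T w).
      by rewrite -!iterD; congr iter; apply: natE.
    by rewrite Hk scaler0.
  have Hj : forall j w, iter (a + (m - j)) T w = 0.
    elim=> [|j IH] w; first by rewrite subn0 Qm.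
    have [jm|jm] := ltnP j m.
      have e : (m - j = (m - j.+1).+1)%N by rewrite subnSK.
      by apply: step => w'; rewrite -e; exact: IH.
    have e1 : (m - j.+1 = 0)%N by apply/eqP; rewrite subn_eq0 leqW.
    have e2 : (m - j = 0)%N by apply/eqP; rewrite subn_eq0.
    by rewrite e1 -e2 IH.
  by move=> w; move: (Hj m w); rewrite subnn addn0.
have vX : vanishing_poly_of T 'X^a.
  split; first by rewrite monic_neq0 // monicXn.
  move=> w; rewrite /poly_app size_polyXn big_ord_recr /= big1 ?add0r.
    by rewrite coefXn eqxx scale1r QA.
  by move=> i _; rewrite coefXn /= (ltn_eqF (ltn_ord i)) scale0r.
have szp : size p = a.+1.
  by apply/eqP; rewrite eqn_leq asz andbT; have := pmin _ vX; rewrite size_polyXn.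
have pE : p = 'X^a.
  apply/polyP => i; rewrite coefXn.
  have [ilt|igt] := ltnP i a; first by rewrite plow // (ltn_eqF ilt).
  case: (eqVneq i a) => [->|ia].
    by have := pmon; rewrite monicE lead_coefE szp /= => /eqP.
  by rewrite nth_default // szp ltn_neqAle eq_sym ia igt.
have a0 : (0 < a)%N.
  rewrite lt0n; apply/eqP => a0; move: (QA v0); rewrite a0 /= => v00.
  by rewrite v00 eqxx in v0n0.
rewrite pE; split; first by rewrite /root hornerXn expr0n eqn0Ngt a0.
by move=> x; rewrite /root hornerXn expf_eq0 => /andP [_ /eqP].
Qed.

End Gen.

Lemma vand_elim (K : fieldType) (W : lmodType K) (A : Type) (P : A -> Prop)
  (mul : A -> A -> A) (f : nat -> A -> K) (a0 : A) :
  P a0 -> (forall a b, P a -> P b -> P (mul a b)) ->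
  (forall i a b, P a -> P b -> f i (mul a b) = f i a * f i b) ->
  (forall i a, P a -> f i a != 0) ->
  (forall i j, (i < j)%N -> exists b, P b /\ f i b != f j b) ->
  forall n (u : nat -> W), (forall a, P a -> \sum_(i < n.+1) f i a *: u i = 0) ->
  forall i, (i <= n)%N -> u i = 0.
Proof.
move=> Pa0 Pmul fmul fnz sep; elim=> [|n IH] u H.
  move=> i; rewrite leqn0 => /eqP ->.
  have := H a0 Pa0; rewrite big_ord1 => /eqP.
  by rewrite scaler_eq0 (negbTE (fnz _ _ Pa0)) => /eqP.
have low : forall i, (i <= n)%N -> u i = 0.
  move=> i ilen.
  have [b [Pb fb]] := sep i n.+1 ilen.
  pose u' k := (f k b - f n.+1 b) *: u k.
  have Hu' : forall a, P a -> \sum_(k < n.+1) f k a *: u' k = 0.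
    move=> a Pa.
    have h1 := H (mul a b) (Pmul a b Pa Pb); have h2 := H a Pa.
    transitivity (\sum_(k < n.+2) f k (mul a b) *: u k -
                  f n.+1 b *: \sum_(k < n.+2) f k a *: u k); last first.
      by rewrite h1 h2 scaler0 subrr.
    rewrite scaler_sumr -sumrB [X in _ = X]big_ord_recr /= fmul // scalerA [f n.+1 b * _]mulrC.
    rewrite subrr addr0; apply: eq_bigr => k _.
    by rewrite /u' fmul // !scalerA -scalerBl mulrBr [f n.+1 b * _]mulrC.
  have := IH u' Hu' i ilen; rewrite /u' => /eqP.
  by rewrite scaler_eq0 subr_eq0 (negbTE fb) => /eqP.
move=> i; rewrite leq_eqVlt ltnS => /orP [/eqP ->|]; last exact: low.
have := H a0 Pa0; rewrite big_ord_recr /= big1 ?add0r.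
  by move=> /eqP; rewrite scaler_eq0 (negbTE (fnz _ _ Pa0)) => /eqP.
by move=> k _; rewrite low ?scaler0 // -ltnS.
Qed.

Lemma nilp_of_hom (K : fieldType) (W : lmodType K) (T : W -> W) (p : {poly K})
  (A : Type) (P : A -> Prop) (mul : A -> A -> A) (f : nat -> A -> K) (emb : A -> K) (a0 : A) :
  minpoly_of T p -> P a0 -> (forall a b, P a -> P b -> P (mul a b)) ->
  (forall i a b, P a -> P b -> f i (mul a b) = f i a * f i b) ->
  (forall i a, P a -> f i a != 0) ->
  (forall i j, (i < j)%N -> exists b, P b /\ f i b != f j b) ->
  (forall i a w, P a -> iter i T (emb a *: w) = f i a *: iter i T w) ->
  nilpotent_map T.
Proof.
move=> [pmon [[pn0 vp] _]] Pa0 Pmul fmul fnz sep Hit.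
exists (size p).-1 => v.
have szE : size p = (size p).-1.+1 by rewrite prednK // size_poly_gt0.
have := @vand_elim K W A P mul f a0 Pa0 Pmul fmul fnz sep (size p).-1
  (fun i => p`_i *: iter i T v) _ _ (leqnn _).
  rewrite -lead_coefE (monicP pmon) scale1r; apply.
move=> a Pa; transitivity (poly_app p T (emb a *: v)); last exact: vp.
rewrite /poly_app -szE.
by apply: eq_bigr => i _; rewrite Hit // !scalerA mulrC.
Qed.

Lemma inf_list (F : fieldType) : infinite_type F ->
  forall n, exists s : seq F, [/\ uniq s, size s = n & 0 \notin s].
Proof.
move=> inf; elim=> [|n [s [us ss s0]]]; first by exists [::].
have [x xn] := inf (0 :: s).
move: xn; rewrite in_cons negb_or => /andP [x0 xs].
exists (x :: s); split => //=; first by rewrite xs.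
  by rewrite ss.
by rewrite in_cons negb_or eq_sym x0.
Qed.

Lemma inf_sep (F : fieldType) : infinite_type F ->
  forall e1 e2 : nat, e1 != e2 -> exists b : F, b != 0 /\ b ^+ e1 != b ^+ e2.
Proof.
move=> inf e1 e2 e12.
pose q : {poly F} := 'X^e1 - 'X^e2.
have qn0 : q != 0.
  apply/eqP => /(congr1 (fun r : {poly F} => r`_e1)).
  by rewrite coefB !coefXn eqxx (negbTE e12) subr0 coef0 => /eqP; rewrite oner_eq0.
have [s [us ss s0]] := @inf_list F inf (size q).
case: (boolP (all (root q) s)) => [H|].
  by have := max_poly_roots qn0 H us; rewrite ss ltnn.
move/allPn => [b bs nb]; exists b; split.
  by apply: contraNneq s0 => <-.
by move: nb; rewrite rootE hornerD hornerN !hornerXn subr_eq0.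
Qed.

Lemma card2_a (F : fieldType) : card_gt2 F -> exists a : F, a != 0 /\ a != 1.
Proof.
move=> [x [y [z [xy xz yz]]]].
have [x0|x0] := eqVneq x 0.
  subst x; have [y1|y1] := eqVneq y 1.
    by subst y; exists z; rewrite eq_sym xz eq_sym yz.
  by exists y; rewrite eq_sym xy y1.
have [x1|x1] := eqVneq x 1; last by exists x; rewrite x0 x1.
subst x; have [y0|y0] := eqVneq y 0.
  by subst y; exists z; split; rewrite eq_sym.
by exists y; split; rewrite // eq_sym.
Qed.

Lemma part3_field (F : fieldType) (V : lmodType F) (T : V -> V) (p : {poly F}) :
  minpoly_of T p -> homogeneous_of 1 T -> card_gt2 F ->
  forall lam, eigenvalue_of T lam -> root p lam.
Proof.
move=> [_ [vp _]] H c2 lam [v [vn0 Tv]].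
have [a [a0 a1]] := @card2_a F c2.
have T0 : T 0 = 0.
  have := H a 0 a0; rewrite scaler0 expr1 => /eqP.
  rewrite -{1}(scale1r (T 0)) -subr_eq0 -scalerBl scaler_eq0 subr_eq0 eq_sym (negbTE a1) /=.
  by move/eqP.
apply: (root_eig _ _ vp vn0); apply: iter_eig => // i.
have [e0|en0] := eqVneq (lam ^+ i) 0; first by rewrite e0 !scale0r T0.
by rewrite H // expr1.
Qed.

Lemma part3_norm (K : numFieldType) (V : lmodType K) (T : V -> V) (p : {poly K}) :
  (exists v : V, v != 0) -> minpoly_of T p ->
  (forall (a : K) v, a != 0 -> T (a *: v) = `|a| *: T v) ->
  root p 0 /\ forall lam, eigenvalue_of T lam -> root p `|lam|.
Proof.
move=> [v0 v0n0] [_ [vp _]] H.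
have r0 : root p 0.
  apply: (root0_shift (-1) v0 vp v0n0).
    by rewrite lt_eqF // (lt_trans _ ltr01) // ltrN10.
  by move=> w; rewrite H ?oppr_eq0 ?oner_eq0 // normrN1 scale1r.
split=> // lam [v [vn0 Tv]].
have [->|lam0] := eqVneq lam 0; first by rewrite normr0.
have wn0 : lam *: v != 0 by rewrite scaler_eq0 negb_or lam0.
apply: (root_eig _ _ vp wn0); apply: iter_eig.
  by rewrite H // Tv.
move=> i; rewrite H ?expf_neq0 ?normr_eq0 //.
by rewrite normrX normr_id.
Qed.

Lemma part4_eig (F : fieldType) (V : lmodType F) (T : V -> V) (p : {poly F}) (Q : F -> Prop) :
  minpoly_of T p -> (forall a w, Q a -> T (a *: w) = T w) ->
  forall lam v, Q lam -> lam != 0 -> v != 0 -> T v = lam *: v -> root p 1.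
Proof.
move=> [_ [vp _]] H lam v Ql lam0 vn0 Tv.
have wn0 : lam *: v != 0 by rewrite scaler_eq0 negb_or lam0.
apply: (root_eig _ _ vp wn0); apply: iter_eig.
  by rewrite H // Tv scale1r.
by move=> i; rewrite expr1n !scale1r.
Qed.

Lemma powR2_sep (R : realType) (g : R) : 0 <= g -> g != 0 -> g != 1 ->
  forall i j, (i < j)%N -> 2 `^ (g ^+ i) != 2 `^ (g ^+ j).
Proof.
move=> g0 gn0 g1 i j ij; apply/negP => /eqP E.
have two0 : (2 : R) != 0 by rewrite pnatr_eq0.
have : 2 `^ (g ^+ j - g ^+ i) == 1.
  rewrite powRB; last by rewrite two0 implybT.
  have h : 2 `^ (g ^+ j) != 0 by rewrite powR_eq0 negb_and two0.
  by rewrite E (divff h).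
rewrite powR_eq1 => /or3P [|| ].
- by rewrite gt_eqF // ltr1n.
- by rewrite ltNge ler0n.
rewrite subr_eq0 => /eqP E2.
have : g ^+ i * g ^+ (j - i) = g ^+ i * 1.
  by rewrite mulr1 -exprD subnKC ?(ltnW ij).
move/(mulfI (expf_neq0 _ gn0))/eqP.
have ji : (0 < j - i)%N by rewrite subn_gt0.
by rewrite (pexpr_eq1 ji g0) (negbTE g1).
Qed.

Lemma part2_R (R : realType) (V : lmodType R) (T : V -> V) (p : {poly R}) (g : R) :
  minpoly_of T p -> 0 <= g -> g != 0 -> g != 1 ->
  (forall t w, 0 < t -> T (t *: w) = t `^ g *: T w) -> nilpotent_map T.
Proof.
move=> mp g0 gn0 g1 H.
apply: (@nilp_of_hom R V T p R (fun t => 0 < t) *%R (fun i t => t `^ (g ^+ i)) id 1 mp ltr01).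
- by move=> a b; apply: mulr_gt0.
- by move=> i a b a0 b0; rewrite powRM // ltW.
- by move=> i a a0; rewrite gt_eqF // powR_gt0.
- by move=> i j ij; exists 2; split; [rewrite ltr0n | exact: powR2_sep].
elim=> [|i IH] a w a0 /=; first by rewrite expr0 powRr1 ?ltW.
by rewrite IH // H ?powR_gt0 // -powRrM -exprSr.
Qed.

Lemma part2_C (R : realType) (V : lmodType R[i]) (T : V -> V) (p : {poly R[i]}) (g : R) :
  minpoly_of T p -> 0 <= g -> g != 0 -> g != 1 ->
  (forall t w, 0 < t -> T (t%:C%C *: w) = (t `^ g)%:C%C *: T w) -> nilpotent_map T.
Proof.
move=> mp g0 gn0 g1 H.
apply: (@nilp_of_hom R[i] V T p R (fun t => 0 < t) *%R (fun i t => (t `^ (g ^+ i))%:C%C)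
  (fun t => t%:C%C) 1 mp ltr01).
- by move=> a b; apply: mulr_gt0.
- by move=> i a b a0 b0; rewrite powRM ?ltW // rmorphM.
- by move=> i a a0; rewrite fmorph_eq0 gt_eqF // powR_gt0.
- by move=> i j ij; exists 2; split; [rewrite ltr0n | rewrite (inj_eq (@complexI R)); exact: powR2_sep].
elim=> [|i IH] a w a0 /=; first by rewrite expr0 powRr1 ?ltW.
by rewrite IH // H ?powR_gt0 // -powRrM -exprSr.
Qed.

Lemma normcR (R : realType) (t : R) : 0 <= t -> Normc.normc (t%:C)%C = t.
Proof. by move=> t0; rewrite /Normc.normc /= expr0n /= addr0 sqrtr_sqr ger0_norm. Qed.

Lemma normcE' (R : realType) (a : R[i]) : `|a| = (Normc.normc a)%:C%C.
Proof. by case: a. Qed.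

Lemma normc_ge0' (R : realType) (a : R[i]) : 0 <= Normc.normc a.
Proof. by case: a => x y; rewrite /Normc.normc sqrtr_ge0. Qed.

Lemma normc_gt0' (R : realType) (a : R[i]) : a != 0 -> 0 < Normc.normc a.
Proof.
move=> a0; rewrite lt_neqAle normc_ge0' andbT eq_sym.
by apply/eqP => /Normc.eq0_normc; apply/eqP.
Qed.

Lemma part4_field (F : fieldType) (V : lmodType F) (T : V -> V) (p : {poly F}) :
  (exists v : V, v != 0) -> minpoly_of T p -> homogeneous_of 0 T ->
  (~ root p 1 -> forall lam, eigenvalue_of T lam -> lam = 0) /\
  (forall a : F, a != 0 -> a != 1 -> root p 0).
Proof.
move=> [v vn0] mp hom.
have H : forall a w, a != 0 -> T (a *: w) = T w by move=> a w a0; rewrite hom // expr0 scale1r.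
split.
  move=> nr1 lam [w [wn0 Tw]]; have [//|l0] := eqVneq lam 0.
  by exfalso; apply: nr1; exact: (part4_eig (fun a => a != 0) mp H lam w l0 l0 wn0 Tw).
by move=> a a0 a1; apply: (root0_shift a v mp.2.1 vn0 a1) => w; apply: H.
Qed.

Theorem mainTheorem18 :
  (* (1) nilpotent + gamma-homogeneous_of, arbitrary field F *)
  (forall (F : fieldType) (V : lmodType F) (T : V -> V) (p : {poly F}) (gamma : nat),
     (exists v : V, v != 0) -> minpoly_of T p ->
     nilpotent_map T -> homogeneous_of gamma T ->
     [/\ eigenvalue_of T 0, (forall lam, eigenvalue_of T lam -> lam = 0),
         root p 0 & (forall x, root p x -> x = 0)]) /\
  (* (1) nilpotent + absolutely gamma-homogeneous_of, F = R *)
  (forall (R : realType) (V : lmodType R) (T : V -> V) (p : {poly R}) (gamma : R),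
     (exists v : V, v != 0) -> minpoly_of T p -> 0 <= gamma ->
     nilpotent_map T -> abs_homogeneous_R gamma T ->
     [/\ eigenvalue_of T 0, (forall lam, eigenvalue_of T lam -> lam = 0),
         root p 0 & (forall x, root p x -> x = 0)]) /\
  (* (1) nilpotent + absolutely gamma-homogeneous_of, F = C *)
  (forall (R : realType) (V : lmodType R[i]) (T : V -> V) (p : {poly R[i]}) (gamma : R),
     (exists v : V, v != 0) -> minpoly_of T p -> 0 <= gamma ->
     nilpotent_map T -> abs_homogeneous_C gamma T ->
     [/\ eigenvalue_of T 0, (forall lam, eigenvalue_of T lam -> lam = 0),
         root p 0 & (forall x, root p x -> x = 0)]) /\
  (* (2) not nilpotent, F infinite, gamma not in {0,1}: not gamma-homogeneous_of *)
  (forall (F : fieldType) (V : lmodType F) (T : V -> V) (p : {poly F}) (gamma : nat),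
     (exists v : V, v != 0) -> minpoly_of T p ->
     ~ nilpotent_map T -> infinite_type F -> gamma != 0%N -> gamma != 1%N ->
     ~ homogeneous_of gamma T) /\
  (* (2) F = R: neither absolutely nor positively gamma-homogeneous_of *)
  (forall (R : realType) (V : lmodType R) (T : V -> V) (p : {poly R}) (gamma : R),
     (exists v : V, v != 0) -> minpoly_of T p ->
     ~ nilpotent_map T -> 0 <= gamma -> gamma != 0 -> gamma != 1 ->
     ~ abs_homogeneous_R gamma T /\ ~ pos_homogeneous gamma T) /\
  (* (2) F = C: not absolutely gamma-homogeneous_of *)
  (forall (R : realType) (V : lmodType R[i]) (T : V -> V) (p : {poly R[i]}) (gamma : R),
     (exists v : V, v != 0) -> minpoly_of T p ->
     ~ nilpotent_map T -> 0 <= gamma -> gamma != 0 -> gamma != 1 ->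
     ~ abs_homogeneous_C gamma T) /\
  (* (3) 1-homogeneous_of, |F| > 2 *)
  (forall (F : fieldType) (V : lmodType F) (T : V -> V) (p : {poly F}),
     (exists v : V, v != 0) -> minpoly_of T p ->
     homogeneous_of 1 T -> card_gt2 F ->
     forall lam, eigenvalue_of T lam -> root p lam) /\
  (* (3) absolutely 1-homogeneous_of, F = R *)
  (forall (R : realType) (V : lmodType R) (T : V -> V) (p : {poly R}),
     (exists v : V, v != 0) -> minpoly_of T p ->
     abs_homogeneous_R 1 T ->
     root p 0 /\ forall lam, eigenvalue_of T lam -> root p `|lam|) /\
  (* (3) absolutely 1-homogeneous_of, F = C *)
  (forall (R : realType) (V : lmodType R[i]) (T : V -> V) (p : {poly R[i]}),
     (exists v : V, v != 0) -> minpoly_of T p ->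
     abs_homogeneous_C 1 T ->
     root p 0 /\ forall lam, eigenvalue_of T lam -> root p `|lam|) /\
  (* (4) 0-homogeneous_of, arbitrary field F *)
  (forall (F : fieldType) (V : lmodType F) (T : V -> V) (p : {poly F}),
     (exists v : V, v != 0) -> minpoly_of T p ->
     homogeneous_of 0 T ->
     (~ root p 1 -> forall lam, eigenvalue_of T lam -> lam = 0) /\
     (card_gt2 F -> root p 0)) /\
  (* (4) absolutely 0-homogeneous_of, F = R *)
  (forall (R : realType) (V : lmodType R) (T : V -> V) (p : {poly R}),
     (exists v : V, v != 0) -> minpoly_of T p ->
     abs_homogeneous_R 0 T ->
     (~ root p 1 -> forall lam, eigenvalue_of T lam -> lam = 0) /\ root p 0) /\
  (* (4) absolutely 0-homogeneous_of, F = C *)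
  (forall (R : realType) (V : lmodType R[i]) (T : V -> V) (p : {poly R[i]}),
     (exists v : V, v != 0) -> minpoly_of T p ->
     abs_homogeneous_C 0 T ->
     (~ root p 1 -> forall lam, eigenvalue_of T lam -> lam = 0) /\ root p 0) /\
  (* (4) positively 0-homogeneous_of, F = R *)
  (forall (R : realType) (V : lmodType R) (T : V -> V) (p : {poly R}),
     (exists v : V, v != 0) -> minpoly_of T p ->
     pos_homogeneous 0 T ->
     (~ root p 1 -> forall lam, eigenvalue_of T lam -> 0 <= lam -> lam = 0) /\ root p 0).
Proof.
split.
  move=> F V T p g ex mp nil hom; have [r0 rx] := nil_minpoly nil ex mp.
  split => //; first exact: nil_eig0.
  apply: nil_eig_only0 nil _ => c v c0.
  by exists (c ^+ g); split; [exact: expf_neq0 | exact: hom].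
split.
  move=> R V T p g ex mp g0 nil hom; have [r0 rx] := nil_minpoly nil ex mp.
  split => //; first exact: nil_eig0.
  apply: nil_eig_only0 nil _ => c v c0.
  exists (`|c| `^ g); split; last exact: hom.
  by rewrite gt_eqF // powR_gt0 // normr_gt0.
split.
  move=> R V T p g ex mp g0 nil hom; have [r0 rx] := nil_minpoly nil ex mp.
  split => //; first exact: nil_eig0.
  apply: nil_eig_only0 nil _ => c v c0.
  exists ((Normc.normc c `^ g)%:C%C); split; last exact: hom.
  by rewrite fmorph_eq0 gt_eqF // powR_gt0 // normc_gt0'.
split.
  move=> F V T p g ex mp nn inf g0 g1 hom; apply: nn.
  have g2 : (1 < g)%N by rewrite ltn_neqAle eq_sym g1 lt0n g0.
  apply: (@nilp_of_hom F V T p F (fun a => a != 0) *%R (fun i a => a ^+ (g ^ i)%N) id 1 mp (oner_neq0 _)).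
  - by move=> a b a0 b0; rewrite mulf_neq0.
  - by move=> i a b _ _; rewrite exprMn.
  - by move=> i a a0; rewrite expf_neq0.
  - move=> i j ij.
    have gij : (g ^ i != g ^ j)%N by rewrite ltn_eqF // ltn_exp2l.
    have [b [b0 bn]] := @inf_sep F inf _ _ gij.
    by exists b.
  elim=> [|i IH] a w a0 /=; first by rewrite expn0 expr1.
  by rewrite IH // hom ?expf_neq0 // -exprM expnSr.
split.
  move=> R V T p g ex mp nn g0 gn0 g1; split.
    move=> Habs; apply: nn; apply: (@part2_R R V T p g mp g0 gn0 g1) => t w t0.
    by rewrite Habs ?gt_eqF // gtr0_norm.
  by move=> Hpos; apply: nn; apply: (@part2_R R V T p g mp g0 gn0 g1) => t w t0; rewrite Hpos.
split.
  move=> R V T p g ex mp nn g0 gn0 g1 Habs; apply: nn.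
  apply: (@part2_C R V T p g mp g0 gn0 g1) => t w t0.
  by rewrite Habs ?fmorph_eq0 ?gt_eqF // normcR // ltW.
split.
  by move=> F V T p ex mp hom c2; exact: part3_field.
split.
  move=> R V T p ex mp H; apply: (part3_norm ex mp) => a v a0.
  by rewrite H // powRr1 // normr_ge0.
split.
  move=> R V T p ex mp H; apply: (part3_norm ex mp) => a v a0.
  by rewrite H // powRr1 ?normcE' // normc_ge0'.
split.
  move=> F V T p ex mp hom; have [h1 h2] := part4_field ex mp hom.
  split => // c2; have [a [a0 a1]] := card2_a c2; exact: h2 a a0 a1.
have two0 : forall K : numFieldType, (2 : K) != 0 by move=> K; rewrite pnatr_eq0.
have two1 : forall K : numFieldType, (2 : K) != 1 by move=> K; rewrite gt_eqF // ltr1n.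
split.
  move=> R V T p ex mp H.
  have hom : homogeneous_of 0 T by move=> a w a0; rewrite H // powRr0 expr0.
  have [h1 h2] := part4_field ex mp hom.
  by split => //; exact: (h2 2 (two0 _) (two1 _)).
split.
  move=> R V T p ex mp H.
  have hom : homogeneous_of 0 T by move=> a w a0; rewrite H // powRr0 expr0.
  have [h1 h2] := part4_field ex mp hom.
  by split => //; exact: (h2 2 (two0 _) (two1 _)).
move=> R V T p [v vn0] mp H.
have H' : forall a w, 0 < a -> T (a *: w) = T w by move=> a w a0; rewrite H // powRr0 scale1r.
split.
  move=> nr1 lam [w [wn0 Tw]] l0; have [//|ln0] := eqVneq lam 0.
  exfalso; apply: nr1; apply: (part4_eig (fun a => 0 < a) mp H' lam w _ ln0 wn0 Tw).
  by rewrite lt_neqAle eq_sym ln0.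
apply: (root0_shift 2 v mp.2.1 vn0 (two1 _)) => w; apply: H'.
by rewrite ltr0n.
Qed.
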